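(* Let $\vartheta(z,\tau)=\sum_{m\in\mathbf{Z}}e^{\pi i m^2\tau+2\pi i mz}$ for $z\in\mathbf{C}$, $\operatorname{Im}\tau>0$, and for $t>0$ let $c(t)=\min_{x\in\mathbf{R}}\vartheta(x,it)$ and $C(t)=\vartheta(0,it)$. Then (i) for every $t>0$, $c(t)=\vartheta(\tfrac12,it)$; (ii) for every $t>0.527$, $\dfrac{C(t)\,(C(t)-1)}{c(t)}<1$. *)

(* Defs.v *)
From Stdlib Require Import Reals ZArith.
From Coquelicot Require Import Coquelicot.
Open Scope R_scope.

(* The m-th term  e^{pi i m^2 tau + 2 pi i m z}  of the Jacobi theta series,
   for z = (zr, zi), tau = (tr, ti) in C, written as (real part, imag part):
   modulus  exp(-pi m^2 ti - 2 pi m zi),  argument  pi m^2 tr + 2 pi m zr. *)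
Definition theta_mod (m : Z) (z tau : C) : R :=
  exp (- PI * IZR m ^ 2 * snd tau - 2 * PI * IZR m * snd z).
Definition theta_arg (m : Z) (z tau : C) : R :=
  PI * IZR m ^ 2 * fst tau + 2 * PI * IZR m * fst z.
Definition theta_term (m : Z) (z tau : C) : C :=
  (theta_mod m z tau * cos (theta_arg m z tau),
   theta_mod m z tau * sin (theta_arg m z tau)).

(* Sum over m in Z, organized as m = 0, then the pairs {n, -n} for n >= 1
   (the series is absolutely convergent for Im tau > 0, so the order is
   irrelevant). *)
Definition theta_pair (z tau : C) (n : nat) : C :=
  match n with
  | O => theta_term 0 z tau
  | S _ => Cplus (theta_term (Z.of_nat n) z tau) (theta_term (- Z.of_nat n) z tau)
  end.

Definition vartheta (z tau : C) : C :=
  (Series (fun n => fst (theta_pair z tau n)),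
   Series (fun n => snd (theta_pair z tau n))).

(* vartheta(x, i t) for real x, t; it is real-valued, we take its real part. *)
Definition theta_it (x t : R) : R := fst (vartheta (x, 0) (0, t)).

Definition c_min (t : R) : R :=
  real (Glb_Rbar (fun y => exists x : R, y = theta_it x t)).

Definition C_max (t : R) : R := theta_it 0 t.

(* Main.v *)
Require Import Defs.
From Stdlib Require Import Reals ZArith.
From Coquelicot Require Import Coquelicot.
From Stdlib Require Import Lra Lia Machin.
Open Scope R_scope.

Definition ex (t r : R) : R := exp (- PI * t * r).

Lemma ex_plus t a b : ex t (a + b) = ex t a * ex t b.
Proof. unfold ex; rewrite <- exp_plus; f_equal; ring. Qed.
Lemma ex_0 t : ex t 0 = 1.
Proof. unfold ex; rewrite Rmult_0_r; apply exp_0. Qed.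
Lemma ex_pos t r : 0 < ex t r.
Proof. apply exp_pos. Qed.
Lemma ex_le t a b : 0 < t -> a <= b -> ex t b <= ex t a.
Proof.
  intros Ht Hab; unfold ex.
  destruct (Rle_lt_or_eq_dec _ _ Hab) as [H|H].
  - left; apply exp_increasing.
    assert (0 < PI * t) by (apply Rmult_lt_0_compat; [apply PI_RGT_0|lra]).
    nra.
  - subst; lra.
Qed.
Lemma ex_lt1 t r : 0 < t -> 0 < r -> ex t r < 1.
Proof.
  intros Ht Hr; unfold ex; rewrite <- exp_0; apply exp_increasing.
  assert (0 < PI * t) by (apply Rmult_lt_0_compat; [apply PI_RGT_0|lra]).
  nra.
Qed.
Lemma ex_pow t n : ex t 1 ^ n = ex t (INR n).
Proof.
  induction n.
  - simpl; rewrite ex_0; auto.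
  - rewrite S_INR, ex_plus, <- IHn; simpl; ring.
Qed.

Definition u (t x : R) (n : nat) : R :=
  match n with O => 1 | S _ => 2 * ex t (INR n ^ 2) * cos (2 * PI * INR n * x) end.

Lemma abs_u t x n : 0 < t -> Rabs (u t x n) <= 2 * ex t (INR n ^ 2).
Proof.
  intros Ht; destruct n as [|m].
  - simpl; rewrite Rmult_0_l, ex_0, Rabs_R1; lra.
  - unfold u. rewrite Rabs_mult, (Rabs_pos_eq (2 * _)).
    2: { generalize (ex_pos t (INR (S m) ^ 2)); lra. }
    generalize (COS_bound (2 * PI * INR (S m) * x)); intros [H1 H2].
    assert (Rabs (cos (2 * PI * INR (S m) * x)) <= 1) by (apply Rabs_le; lra).
    generalize (ex_pos t (INR (S m) ^ 2)); nra.
Qed.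

Lemma u_bound_shift t x n k : 0 < t ->
  Rabs (u t x (S n + k)) <= 2 * ex t (INR (S n) ^ 2) * ex t 1 ^ k.
Proof.
  intros Ht. eapply Rle_trans; [apply abs_u; auto|].
  rewrite ex_pow, Rmult_assoc, <- ex_plus.
  apply Rmult_le_compat_l; [lra|]. apply ex_le; auto.
  rewrite plus_INR. assert (1 <= INR (S n)) by (rewrite S_INR; generalize (pos_INR n); lra).
  generalize (pos_INR k); nra.
Qed.

Lemma ex_series_geom2 t c : 0 < t -> ex_series (fun k => c * ex t 1 ^ k).
Proof.
  intros Ht.
  apply (ex_series_scal_l c (fun k => ex t 1 ^ k)).
  apply ex_series_geom. rewrite Rabs_pos_eq. apply ex_lt1; lra. left; apply ex_pos.
Qed.

Lemma ex_series_u t x : 0 < t -> ex_series (u t x).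
Proof.
  intros Ht.
  apply (ex_series_le (V:=R_CompleteNormedModule)) with (b := fun k => 2 * ex t 1 ^ k).
  - intros n. change (norm (u t x n)) with (Rabs (u t x n)).
    eapply Rle_trans; [apply abs_u; auto|]. rewrite ex_pow.
    apply Rmult_le_compat_l; [lra|]. apply ex_le; auto.
    destruct n; [simpl; lra|]. rewrite S_INR. generalize (pos_INR n); nra.
  - apply ex_series_geom2; auto.
Qed.

Lemma tail_u t x n : 0 < t ->
  Rabs (Series (u t x) - sum_f_R0 (u t x) n) <= 2 * ex t (INR (S n) ^ 2) / (1 - ex t 1).
Proof.
  intros Ht.
  rewrite (Series_incr_n (u t x) (S n)); [|lia|apply ex_series_u; auto].
  simpl pred. replace (sum_f_R0 (u t x) n + Series (fun k => u t x (S n + k)) - sum_f_R0 (u t x) n)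
    with (Series (fun k => u t x (S n + k))) by ring.
  assert (Hq : ex t 1 < 1) by (apply ex_lt1; lra).
  assert (Hq0 : 0 < ex t 1) by apply ex_pos.
  assert (Hb : ex_series (fun k => 2 * ex t (INR (S n) ^ 2) * ex t 1 ^ k)) by (apply ex_series_geom2; auto).
  eapply Rle_trans; [apply Series_Rabs|].
  - apply (ex_series_le (V:=R_CompleteNormedModule)) with (b := fun k => 2 * ex t (INR (S n) ^ 2) * ex t 1 ^ k); auto.
    intros k. change (norm (Rabs (u t x (S n + k)))) with (Rabs (Rabs (u t x (S n + k)))).
    rewrite Rabs_Rabsolu. apply u_bound_shift; auto.
  - eapply Rle_trans; [apply Series_le with (b := fun k => 2 * ex t (INR (S n) ^ 2) * ex t 1 ^ k); auto|].
    + intros k; split; [apply Rabs_pos|apply u_bound_shift; auto].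
    + rewrite Series_scal_l, Series_geom. unfold Rdiv; lra.
      rewrite Rabs_pos_eq; lra.
Qed.

Lemma pair_u t x n : fst (theta_pair (x, 0) (0, t) n) = u t x n.
Proof.
  destruct n as [|m].
  - unfold theta_pair, theta_term, theta_mod, theta_arg, u; cbn [fst snd].
    replace (- PI * IZR 0 ^ 2 * t - 2 * PI * IZR 0 * 0) with 0 by (simpl; ring).
    replace (PI * IZR 0 ^ 2 * 0 + 2 * PI * IZR 0 * x) with 0 by (simpl; ring).
    rewrite exp_0, cos_0; ring.
  - change (fst (theta_pair (x, 0) (0, t) (S m))) with
      (fst (theta_term (Z.of_nat (S m)) (x, 0) (0, t)) + fst (theta_term (- Z.of_nat (S m)) (x, 0) (0, t))).
    unfold theta_term, theta_mod, theta_arg, u; cbn [fst snd].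
    rewrite opp_IZR, <- INR_IZR_INZ.
    replace (- PI * INR (S m) ^ 2 * t - 2 * PI * INR (S m) * 0) with (- PI * t * INR (S m) ^ 2) by ring.
    replace (- PI * (- INR (S m)) ^ 2 * t - 2 * PI * - INR (S m) * 0) with (- PI * t * INR (S m) ^ 2) by ring.
    replace (PI * INR (S m) ^ 2 * 0 + 2 * PI * INR (S m) * x) with (2 * PI * INR (S m) * x) by ring.
    replace (PI * (- INR (S m)) ^ 2 * 0 + 2 * PI * - INR (S m) * x) with (- (2 * PI * INR (S m) * x)) by ring.
    rewrite cos_neg. unfold ex. ring.
Qed.

Lemma theta_u t x : theta_it x t = Series (u t x).
Proof.
  unfold theta_it, vartheta; cbn [fst].
  apply Series_ext; intros n; apply pair_u.
Qed.

Fixpoint msum (f : nat -> R) (m : nat) : R :=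
  match m with O => 0 | S m' => msum f m' + f m' end.

Lemma msum_ext f g m : (forall k, (k < m)%nat -> f k = g k) -> msum f m = msum g m.
Proof.
  induction m; intros H; simpl; auto.
  rewrite IHm by (intros; apply H; lia). rewrite H by lia. auto.
Qed.
Lemma msum_plus f g m : msum (fun k => f k + g k) m = msum f m + msum g m.
Proof. induction m; simpl; [ring|rewrite IHm; ring]. Qed.
Lemma msum_scal c f m : msum (fun k => c * f k) m = c * msum f m.
Proof. induction m; simpl; [ring|rewrite IHm; ring]. Qed.
Lemma msum_minus f g m : msum (fun k => f k - g k) m = msum f m - msum g m.
Proof. induction m; simpl; [ring|rewrite IHm; ring]. Qed.
Lemma msum_first f m : msum f (S m) = f O + msum (fun k => f (S k)) m.
Proof.
  induction m.
  - simpl; ring.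
  - change (msum f (S (S m))) with (msum f (S m) + f (S m)).
    rewrite IHm. simpl. ring.
Qed.
Lemma msum_le f g m : (forall k, (k < m)%nat -> f k <= g k) -> msum f m <= msum g m.
Proof.
  induction m; intros H; simpl; [lra|].
  apply Rplus_le_compat; [apply IHm; intros; apply H; lia|apply H; lia].
Qed.
Lemma msum_abs f m : Rabs (msum f m) <= msum (fun k => Rabs (f k)) m.
Proof.
  induction m; simpl.
  - rewrite Rabs_R0; lra.
  - eapply Rle_trans; [apply Rabs_triang|]. lra.
Qed.
Lemma msum_const c m : msum (fun _ => c) m = INR m * c.
Proof. induction m; simpl msum; [simpl; ring|rewrite IHm, S_INR; ring]. Qed.
Lemma msum_geom q m : q <> 1 -> msum (fun k => q ^ k) m = (1 - q ^ m) / (1 - q).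
Proof.
  intros Hq. assert (1 - q <> 0) by (intro; apply Hq; lra).
  induction m; simpl msum.
  - simpl; field; auto.
  - rewrite IHm. simpl. field; auto.
Qed.

Definition W (f : Z -> R) (a : Z) (len : nat) : R := msum (fun k => f (a + Z.of_nat k)%Z) len.

Lemma W_last f a l : W f a (S l) = W f a l + f (a + Z.of_nat l)%Z.
Proof. reflexivity. Qed.
Lemma W_first f a l : W f a (S l) = f a + W f (a + 1)%Z l.
Proof.
  unfold W; rewrite msum_first. f_equal.
  - f_equal; lia.
  - apply msum_ext; intros; f_equal; lia.
Qed.
Lemma W_ext f g a l : (forall z, f z = g z) -> W f a l = W g a l.
Proof. intros H; unfold W; apply msum_ext; intros; auto. Qed.
Lemma W_shift f a l c : W (fun z => f (z + c)%Z) a l = W f (a + c)%Z l.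
Proof. unfold W; apply msum_ext; intros; f_equal; lia. Qed.
Lemma W_plus f g a l : W (fun z => f z + g z) a l = W f a l + W g a l.
Proof. apply msum_plus. Qed.
Lemma W_scal c f a l : W (fun z => c * f z) a l = c * W f a l.
Proof. apply (msum_scal c (fun k => f (a + Z.of_nat k)%Z)). Qed.

Fixpoint poch (t : R) (m : nat) : R :=
  match m with O => 1 | S m' => poch t m' * (1 - ex t (2 * INR m)) end.

Lemma poch_S t m : poch t (S m) = poch t m * (1 - ex t (2 * INR (S m))).
Proof. reflexivity. Qed.

Lemma fac_pos t m : 0 < t -> 0 < 1 - ex t (2 * INR (S m)).
Proof.
  intros Ht. assert (ex t (2 * INR (S m)) < 1); [|lra].
  apply ex_lt1; auto. rewrite S_INR; generalize (pos_INR m); lra.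
Qed.

Lemma poch_pos t m : 0 < t -> 0 < poch t m.
Proof.
  intros Ht; induction m; simpl poch; [lra|].
  apply Rmult_lt_0_compat; auto. apply fac_pos; auto.
Qed.

Definition ip t (z : Z) : R := if (z <? 0)%Z then 0 else / poch t (Z.to_nat z).

Lemma ip_neg t z : (z < 0)%Z -> ip t z = 0.
Proof. intros H; unfold ip; rewrite (proj2 (Z.ltb_lt _ _) H); auto. Qed.
Lemma ip_nat t m : ip t (Z.of_nat m) = / poch t m.
Proof.
  unfold ip. replace (Z.of_nat m <? 0)%Z with false by (symmetry; apply Z.ltb_ge; lia).
  rewrite Nat2Z.id; auto.
Qed.

Lemma ipS t z : 0 < t -> ip t (z - 1) = (1 - ex t (2 * IZR z)) * ip t z.
Proof.
  intros Ht. destruct (Z_lt_le_dec z 0) as [Hz|Hz].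
  - rewrite !ip_neg by lia. ring.
  - destruct (Z_of_nat_complete z Hz) as [m ->].
    destruct m as [|m].
    + rewrite ip_neg by lia. simpl IZR. rewrite Rmult_0_r, ex_0. ring.
    + replace (Z.of_nat (S m) - 1)%Z with (Z.of_nat m) by lia.
      rewrite !ip_nat, <- INR_IZR_INZ, poch_S.
      generalize (poch_pos t m Ht) (fac_pos t m Ht); intros.
      field; lra.
Qed.

Definition D t (n : nat) (j : Z) : R :=
  ex t (IZR j ^ 2) * poch t (2 * n) * ip t (Z.of_nat n + j) * ip t (Z.of_nat n - j).

Lemma D_zero t n j : (j < - Z.of_nat n \/ Z.of_nat n < j)%Z -> D t n j = 0.
Proof.
  intros [H|H]; unfold D.
  - rewrite (ip_neg t (Z.of_nat n + j)) by lia; ring.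
  - rewrite (ip_neg t (Z.of_nat n - j)) by lia; ring.
Qed.

Lemma ex_neg t a : ex t (- a) = / ex t a.
Proof.
  assert (H : ex t (- a) * ex t a = 1) by (rewrite <- ex_plus, Rplus_opp_l; apply ex_0).
  generalize (ex_pos t a); intros. field_simplify_eq; [|lra]. lra.
Qed.

Definition fa t n := ex t (2 * INR n + 1).

Lemma D_rec t n j : 0 < t ->
  D t (S n) j = (1 + fa t n ^ 2) * D t n j + fa t n * D t n (j - 1) + fa t n * D t n (j + 1).
Proof.
  intros Ht. unfold D, fa.
  replace (Z.of_nat (S n) + j)%Z with (Z.of_nat n + 1 + j)%Z by lia.
  replace (Z.of_nat (S n) - j)%Z with (Z.of_nat n + 1 - j)%Z by lia.
  assert (E1 : ip t (Z.of_nat n + j) = (1 - ex t (2 * IZR (Z.of_nat n + 1 + j))) * ip t (Z.of_nat n + 1 + j)).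
  { rewrite <- ipS; auto. f_equal; lia. }
  assert (E2 : ip t (Z.of_nat n - j) = (1 - ex t (2 * IZR (Z.of_nat n + 1 - j))) * ip t (Z.of_nat n + 1 - j)).
  { rewrite <- ipS; auto. f_equal; lia. }
  assert (E3 : ip t (Z.of_nat n + (j - 1)) = (1 - ex t (2 * IZR (Z.of_nat n + j))) * ((1 - ex t (2 * IZR (Z.of_nat n + 1 + j))) * ip t (Z.of_nat n + 1 + j))).
  { rewrite <- E1, <- ipS; auto. f_equal; lia. }
  assert (E4 : ip t (Z.of_nat n - (j - 1)) = ip t (Z.of_nat n + 1 - j)) by (f_equal; lia).
  assert (E5 : ip t (Z.of_nat n + (j + 1)) = ip t (Z.of_nat n + 1 + j)) by (f_equal; lia).
  assert (E6 : ip t (Z.of_nat n - (j + 1)) = (1 - ex t (2 * IZR (Z.of_nat n - j))) * ((1 - ex t (2 * IZR (Z.of_nat n + 1 - j))) * ip t (Z.of_nat n + 1 - j))).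
  { rewrite <- E2, <- ipS; auto. f_equal; lia. }
  rewrite E1, E2, E3, E4, E5, E6.
  replace (2 * S n)%nat with (S (S (2 * n))) by lia.
  rewrite !poch_S.
  set (A := ex t (IZR j)). set (B := ex t (INR n)). set (c := ex t 1).
  assert (HA : A <> 0) by (generalize (ex_pos t (IZR j)); fold A; lra).
  assert (Fa : ex t (2 * INR n + 1) = B * B * c).
  { unfold B, c. rewrite <- !ex_plus. f_equal; ring. }
  assert (Fp1 : ex t (2 * INR (S (2 * n))) = B * B * B * B * c * c).
  { unfold B, c. rewrite <- !ex_plus. f_equal. rewrite S_INR, mult_INR. simpl INR. ring. }
  assert (Fp2 : ex t (2 * INR (S (S (2 * n)))) = B * B * B * B * c * c * c * c).
  { unfold B, c. rewrite <- !ex_plus. f_equal. rewrite !S_INR, mult_INR. simpl INR. ring. }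
  assert (F1 : ex t (2 * IZR (Z.of_nat n + 1 + j)) = B * B * c * c * A * A).
  { unfold A, B, c. rewrite <- !ex_plus. f_equal. rewrite !plus_IZR, <- INR_IZR_INZ. simpl IZR. ring. }
  assert (F2 : ex t (2 * IZR (Z.of_nat n + 1 - j)) = B * B * c * c / (A * A)).
  { replace (2 * IZR (Z.of_nat n + 1 - j)) with (INR n + INR n + 1 + 1 + - IZR j + - IZR j).
    - rewrite !ex_plus, ex_neg. unfold A, B, c. field. fold A; auto.
    - rewrite minus_IZR, plus_IZR, <- INR_IZR_INZ. simpl IZR. ring. }
  assert (F3 : ex t (2 * IZR (Z.of_nat n + j)) = B * B * A * A).
  { unfold A, B, c. rewrite <- !ex_plus. f_equal. rewrite !plus_IZR, <- INR_IZR_INZ. ring. }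
  assert (F4 : ex t (2 * IZR (Z.of_nat n - j)) = B * B / (A * A)).
  { replace (2 * IZR (Z.of_nat n - j)) with (INR n + INR n + - IZR j + - IZR j).
    - rewrite !ex_plus, ex_neg. unfold A, B. field. fold A; auto.
    - rewrite minus_IZR, <- INR_IZR_INZ. ring. }
  assert (Fm : ex t (IZR (j - 1) ^ 2) = ex t (IZR j ^ 2) * c / (A * A)).
  { replace (IZR (j - 1) ^ 2) with (IZR j ^ 2 + 1 + - IZR j + - IZR j).
    - rewrite !ex_plus, ex_neg. unfold A, c. field. fold A; auto.
    - rewrite minus_IZR. simpl IZR. ring. }
  assert (Fpl : ex t (IZR (j + 1) ^ 2) = ex t (IZR j ^ 2) * c * A * A).
  { unfold A, c. rewrite <- !ex_plus. f_equal. rewrite plus_IZR. simpl IZR. ring. }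
  rewrite Fa, Fp1, Fp2, F1, F2, F3, F4, Fm, Fpl.
  field; auto.
Qed.

Fixpoint Pn t th n : R :=
  match n with O => 1 | S m => Pn t th m * (1 + fa t m ^ 2 + 2 * fa t m * cos th) end.

Definition Sg t th n := W (fun j => D t n j * cos (IZR j * th)) (- Z.of_nat n) (2 * n + 1).

Lemma cos_id th j : 2 * cos th * cos (IZR j * th) = cos (IZR (j + 1) * th) + cos (IZR (j - 1) * th).
Proof.
  rewrite plus_IZR, minus_IZR. simpl IZR.
  replace ((IZR j + 1) * th) with (IZR j * th + th) by ring.
  replace ((IZR j - 1) * th) with (IZR j * th - th) by ring.
  rewrite cos_plus, cos_minus. ring.
Qed.

Lemma D00 t : D t 0 0 = 1.
Proof.
  unfold D. simpl Z.of_nat. rewrite Z.add_0_r, Z.sub_0_r.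
  change 0%Z with (Z.of_nat 0). rewrite ip_nat. simpl. rewrite Rmult_0_l, ex_0. field.
Qed.

Lemma Pn_sum t th n : 0 < t -> Pn t th n = Sg t th n.
Proof.
  intros Ht. induction n as [|n IH].
  - unfold Sg. simpl. unfold W. simpl. rewrite D00. rewrite Rmult_0_l, cos_0. ring.
  - change (Pn t th (S n)) with (Pn t th n * (1 + fa t n ^ 2 + 2 * fa t n * cos th)).
    rewrite IH. unfold Sg.
    set (a := fa t n).
    set (h1 := fun j => D t n j * cos (IZR j * th)).
    set (h2 := fun j => D t n j * cos (IZR (j + 1) * th)).
    set (h3 := fun j => D t n j * cos (IZR (j - 1) * th)).
    assert (L : W h1 (- Z.of_nat n) (2 * n + 1) * (1 + a ^ 2 + 2 * a * cos th) =
                (1 + a ^ 2) * W h1 (- Z.of_nat n) (2 * n + 1) + a * W h2 (- Z.of_nat n) (2 * n + 1)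
                + a * W h3 (- Z.of_nat n) (2 * n + 1)).
    { rewrite <- !W_scal, <- !W_plus. rewrite Rmult_comm, <- W_scal. apply W_ext; intros z.
      unfold h1, h2, h3; cbv beta. generalize (cos_id th z); intros HC.
      replace (cos (IZR (z + 1) * th)) with (2 * cos th * cos (IZR z * th) - cos (IZR (z - 1) * th)) by lra. ring. }
    fold h1. rewrite L. clear L.
    rewrite (W_ext (fun j => D t (S n) j * cos (IZR j * th)) (fun j => (1 + a ^ 2) * h1 j + a * h2 (j + -1)%Z + a * h3 (j + 1)%Z)).
    2: { intros z. unfold h1, h2, h3; cbv beta. rewrite D_rec by auto. fold a.
         replace (z + -1 + 1)%Z with z by lia. replace (z + 1 - 1)%Z with z by lia.
         replace (z + -1)%Z with (z - 1)%Z by lia. ring. }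
    rewrite !W_plus, !W_scal.
    rewrite (W_shift h2), (W_shift h3).
    assert (Hz : forall h : Z -> R, (forall j, (j < - Z.of_nat n \/ Z.of_nat n < j)%Z -> h j = 0) ->
              forall a0, (a0 + Z.of_nat (2 * n + 1) <= - Z.of_nat n \/ Z.of_nat n < a0)%Z -> True) by auto.
    clear Hz.
    assert (Z1 : forall j, (j < - Z.of_nat n \/ Z.of_nat n < j)%Z -> h1 j = 0).
    { intros; unfold h1; rewrite D_zero; auto; ring. }
    assert (Z2 : forall j, (j < - Z.of_nat n \/ Z.of_nat n < j)%Z -> h2 j = 0).
    { intros; unfold h2; rewrite D_zero; auto; ring. }
    assert (Z3 : forall j, (j < - Z.of_nat n \/ Z.of_nat n < j)%Z -> h3 j = 0).
    { intros; unfold h3; rewrite D_zero; auto; ring. }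
    replace (2 * S n + 1)%nat with (S (S (2 * n + 1))) by lia.
    rewrite (W_first h1), (W_last h1).
    rewrite (Z1 (- Z.of_nat (S n))%Z) by lia.
    replace (- Z.of_nat (S n) + 1)%Z with (- Z.of_nat n)%Z by lia.
    rewrite (Z1 (- Z.of_nat n + Z.of_nat (2 * n + 1))%Z) by lia.
    rewrite (W_first h2), (W_first h2).
    rewrite (Z2 (- Z.of_nat (S n) + -1)%Z) by lia.
    rewrite (Z2 (- Z.of_nat (S n) + -1 + 1)%Z) by lia.
    replace (- Z.of_nat (S n) + -1 + 1 + 1)%Z with (- Z.of_nat n)%Z by lia.
    rewrite (W_last h3), (W_last h3).
    replace (- Z.of_nat (S n) + 1)%Z with (- Z.of_nat n)%Z by lia.
    rewrite (Z3 (- Z.of_nat n + Z.of_nat (2 * n + 1))%Z) by lia.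
    rewrite (Z3 (- Z.of_nat n + Z.of_nat (S (2 * n + 1)))%Z) by lia.
    ring.
Qed.

Lemma Pn_mono t x n : 0 < t -> 0 <= Pn t PI n <= Pn t (2 * PI * x) n.
Proof.
  intros Ht. induction n as [|n IH]; simpl Pn; [lra|].
  rewrite cos_PI.
  assert (0 < fa t n) by apply ex_pos.
  generalize (COS_bound (2 * PI * x)); intros [Hc1 Hc2].
  assert (0 <= 1 + fa t n ^ 2 + 2 * fa t n * -1) by (replace (1 + fa t n ^ 2 + 2 * fa t n * -1) with ((1 - fa t n) ^ 2) by ring; apply pow2_ge_0).
  assert (1 + fa t n ^ 2 + 2 * fa t n * -1 <= 1 + fa t n ^ 2 + 2 * fa t n * cos (2 * PI * x)) by nra.
  split; [apply Rmult_le_pos; lra|apply Rmult_le_compat; lra].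
Qed.

Definition cc t n (j : Z) := poch t n ^ 2 * ip t (Z.of_nat n + j) * ip t (Z.of_nat n - j).
Definition Gn t th n := Pn t th n * (poch t n ^ 2 / poch t (2 * n)).

Lemma Gn_W t th n : 0 < t ->
  Gn t th n = W (fun j => ex t (IZR j ^ 2) * cc t n j * cos (IZR j * th)) (- Z.of_nat n) (2 * n + 1).
Proof.
  intros Ht. unfold Gn. rewrite Pn_sum by auto. unfold Sg.
  rewrite Rmult_comm, <- W_scal. apply W_ext; intros z. unfold D, cc.
  generalize (poch_pos t (2 * n) Ht); intros. field. lra.
Qed.

Lemma W_fold f n : W f (- Z.of_nat n) (2 * n + 1) =
  f 0%Z + msum (fun k => f (Z.of_nat (S k)) + f (- Z.of_nat (S k))%Z) n.
Proof.
  induction n as [|n IH].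
  - unfold W. simpl. ring.
  - replace (2 * S n + 1)%nat with (S (S (2 * n + 1))) by lia.
    rewrite W_first, W_last.
    replace (- Z.of_nat (S n) + 1)%Z with (- Z.of_nat n)%Z by lia.
    rewrite IH. cbn [msum].
    replace (- Z.of_nat n + Z.of_nat (2 * n + 1))%Z with (Z.of_nat (S n)) by lia.
    ring.
Qed.

Lemma cc0 t n : 0 < t -> cc t n 0 = 1.
Proof.
  intros Ht. unfold cc. rewrite Z.add_0_r, Z.sub_0_r, ip_nat.
  generalize (poch_pos t n Ht); intros. field. lra.
Qed.

Lemma Gn_fold t x n : 0 < t -> Gn t (2 * PI * x) n =
  1 + msum (fun k => 2 * ex t (INR (S k) ^ 2) * cc t n (Z.of_nat (S k)) * cos (2 * PI * INR (S k) * x)) n.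
Proof.
  intros Ht. rewrite Gn_W, W_fold by auto.
  cbv beta. rewrite cc0 by auto. rewrite Rmult_0_l, cos_0.
  replace (0 ^ 2) with 0 by ring. rewrite ex_0.
  f_equal; [ring|]. apply msum_ext; intros k Hk.
  rewrite opp_IZR, <- INR_IZR_INZ.
  replace (cc t n (- Z.of_nat (S k))) with (cc t n (Z.of_nat (S k))).
  2: { unfold cc. replace (Z.of_nat n + - Z.of_nat (S k))%Z with (Z.of_nat n - Z.of_nat (S k))%Z by lia.
       replace (Z.of_nat n - - Z.of_nat (S k))%Z with (Z.of_nat n + Z.of_nat (S k))%Z by lia. ring. }
  replace ((- INR (S k)) ^ 2) with (INR (S k) ^ 2) by ring.
  replace (- INR (S k) * (2 * PI * x)) with (- (2 * PI * INR (S k) * x)) by ring.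
  rewrite cos_neg.
  replace (INR (S k) * (2 * PI * x)) with (2 * PI * INR (S k) * x) by ring.
  ring.
Qed.

Lemma sum_msum f n : sum_f_R0 f n = f 0%nat + msum (fun k => f (S k)) n.
Proof.
  induction n; cbn [sum_f_R0 msum]; [ring|]. rewrite IHn; ring.
Qed.

Lemma cc_bound t n j : 0 < t -> (j <= n)%nat ->
  0 <= cc t n (Z.of_nat j) <= 1 /\ 1 - cc t n (Z.of_nat j) <= INR j * ex t (2 * (INR n + 1 - INR j)).
Proof.
  intros Ht. induction j as [|j IH]; intros Hj.
  - simpl Z.of_nat. rewrite cc0 by auto. simpl INR. lra.
  - destruct IH as [[c0 c1] c2]; [lia|].
    set (E1 := ex t (2 * IZR (Z.of_nat n + Z.of_nat (S j)))).
    set (E2 := ex t (2 * IZR (Z.of_nat n - Z.of_nat j))).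
    assert (Rel : cc t n (Z.of_nat j) * (1 - E2) = cc t n (Z.of_nat (S j)) * (1 - E1)).
    { unfold cc, E1, E2.
      replace (Z.of_nat n + Z.of_nat j)%Z with ((Z.of_nat n + Z.of_nat (S j)) - 1)%Z by lia.
      replace (Z.of_nat n - Z.of_nat (S j))%Z with ((Z.of_nat n - Z.of_nat j) - 1)%Z by lia.
      rewrite !ipS by auto. ring. }
    set (c := cc t n (Z.of_nat j)) in *. set (c' := cc t n (Z.of_nat (S j))) in *.
    assert (HE1 : 0 < E1) by apply ex_pos.
    assert (HE12 : E1 <= E2).
    { apply ex_le; auto. rewrite !minus_IZR, !plus_IZR, <- !INR_IZR_INZ.
      generalize (pos_INR j); rewrite S_INR; lra. }
    assert (HE2 : E2 < 1).
    { apply ex_lt1; auto. rewrite minus_IZR, <- !INR_IZR_INZ.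
      assert (INR (S j) <= INR n) by (apply le_INR; lia). rewrite S_INR in H. lra. }
    assert (HE2' : E2 = ex t (2 * (INR n + 1 - INR (S j)))).
    { unfold E2; f_equal. rewrite minus_IZR, <- !INR_IZR_INZ, S_INR. ring. }
    assert (HE3 : ex t (2 * (INR n + 1 - INR j)) <= E2).
    { rewrite HE2'. apply ex_le; auto. rewrite S_INR; lra. }
    assert (Hc'0 : 0 <= c').
    { assert (0 <= c' * (1 - E1)) by (rewrite <- Rel; apply Rmult_le_pos; lra).
      destruct (Rle_or_lt 0 c'); auto. nra. }
    assert (Hc'c : c' <= c).
    { destruct (Rle_or_lt c' c); auto. nra. }
    assert (Hlow : c * (1 - E2) <= c') by nra.
    split; [lra|].
    rewrite <- HE2', S_INR.
    assert (INR j * ex t (2 * (INR n + 1 - INR j)) <= INR j * E2) by (apply Rmult_le_compat_l; [apply pos_INR|lra]).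
    nra.
Qed.

Lemma k_le_k2 k : INR k <= INR k ^ 2.
Proof. destruct k; [simpl; lra|]. rewrite S_INR. generalize (pos_INR k); nra. Qed.

Lemma n_qn t n : 0 < t -> INR n * ex t 1 ^ n <= 1 / (1 - ex t 1).
Proof.
  intros Ht. assert (Hq : ex t 1 < 1) by (apply ex_lt1; lra).
  assert (Hq0 : 0 < ex t 1) by apply ex_pos.
  rewrite <- msum_const.
  apply Rle_trans with (msum (fun k => ex t 1 ^ k) n).
  - apply msum_le; intros k Hk. rewrite !ex_pow. apply ex_le; auto. apply le_INR; lia.
  - rewrite msum_geom by lra. apply Rmult_le_compat_r.
    + apply Rlt_le, Rinv_0_lt_compat; lra.
    + generalize (pow_le (ex t 1) n (Rlt_le _ _ Hq0)); lra.
Qed.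

Lemma head_bound t x n : 0 < t ->
  Rabs (sum_f_R0 (u t x) n - Gn t (2 * PI * x) n) <= 2 * ex t (INR n + 1) / (1 - ex t 1) ^ 2.
Proof.
  intros Ht. assert (Hq : ex t 1 < 1) by (apply ex_lt1; lra).
  assert (Hq0 : 0 < ex t 1) by apply ex_pos.
  rewrite sum_msum, Gn_fold by auto. change (u t x 0) with 1.
  replace (1 + msum (fun k => u t x (S k)) n -
     (1 + msum (fun k => 2 * ex t (INR (S k) ^ 2) * cc t n (Z.of_nat (S k)) * cos (2 * PI * INR (S k) * x)) n))
    with (msum (fun k => u t x (S k) - 2 * ex t (INR (S k) ^ 2) * cc t n (Z.of_nat (S k)) * cos (2 * PI * INR (S k) * x)) n)
    by (rewrite msum_minus; ring).
  eapply Rle_trans; [apply msum_abs|].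
  set (K := 2 * INR n * ex t (2 * INR n + 1)).
  apply Rle_trans with (msum (fun k => K * ex t 1 ^ k) n).
  - apply msum_le; intros k Hk.
    change (u t x (S k)) with (2 * ex t (INR (S k) ^ 2) * cos (2 * PI * INR (S k) * x)).
    destruct (cc_bound t n (S k) Ht) as [[c0 c1] c2]; [lia|].
    set (c := cc t n (Z.of_nat (S k))) in *.
    set (e := ex t (INR (S k) ^ 2)).
    set (co := cos (2 * PI * INR (S k) * x)).
    replace (2 * e * co - 2 * e * c * co) with ((2 * e * (1 - c)) * co) by ring.
    rewrite Rabs_mult, Rabs_pos_eq by (generalize (ex_pos t (INR (S k) ^ 2)); fold e; nra).
    assert (Hco : Rabs co <= 1) by (apply Rabs_le; apply COS_bound).
    assert (He : 0 < e) by apply ex_pos.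
    apply Rle_trans with (2 * e * (1 - c)).
    { rewrite <- (Rmult_1_r (2 * e * (1 - c))) at 2. apply Rmult_le_compat_l; [|exact Hco].
      apply Rmult_le_pos; lra. }
    replace (INR n + 1 - INR (S k)) with (INR n - INR k) in c2 by (rewrite S_INR; ring).
    assert (Hkn : INR (S k) <= INR n) by (apply le_INR; lia).
    assert (Hex : e * ex t (2 * (INR n - INR k)) <= ex t (2 * INR n + 1) * ex t 1 ^ k).
    { unfold e. rewrite ex_pow, <- !ex_plus. apply ex_le; auto.
      generalize (k_le_k2 k); rewrite S_INR; nra. }
    unfold K.
    assert (0 <= ex t (2 * (INR n - INR k))) by (left; apply ex_pos).
    assert (0 <= INR (S k)) by apply pos_INR.
    apply Rle_trans with (2 * e * (INR (S k) * ex t (2 * (INR n - INR k)))); [nra|].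
    apply Rle_trans with (2 * INR (S k) * (ex t (2 * INR n + 1) * ex t 1 ^ k)); [nra|].
    assert (0 <= ex t (2 * INR n + 1) * ex t 1 ^ k).
    { apply Rmult_le_pos; [left; apply ex_pos|apply pow_le; lra]. }
    nra.
  - rewrite msum_scal, msum_geom by lra. unfold K.
    assert (Hs : ex t (2 * INR n + 1) = ex t 1 ^ n * ex t (INR n + 1)).
    { rewrite ex_pow, <- ex_plus; f_equal; ring. }
    rewrite Hs.
    generalize (n_qn t n Ht); intros Hn.
    assert (0 <= ex t 1 ^ n) by (apply pow_le; lra).
    assert (0 < ex t (INR n + 1)) by apply ex_pos.
    assert (0 <= INR n) by apply pos_INR.
    set (q := ex t 1) in *. set (b := ex t (INR n + 1)) in *.
    assert (Hiq : 0 < 1 - q) by lra.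
    apply Rle_trans with (2 * INR n * (q ^ n * b) * (1 / (1 - q))).
    { unfold Rdiv. apply Rmult_le_compat_l; [apply Rmult_le_pos; [lra|apply Rmult_le_pos; lra]|].
      rewrite Rmult_1_l. rewrite <- (Rmult_1_l (/ (1 - q))) at 2.
      apply Rmult_le_compat_r; [apply Rlt_le, Rinv_0_lt_compat; lra|].
      lra. }
    replace (2 * INR n * (q ^ n * b) * (1 / (1 - q))) with (2 * b * (INR n * q ^ n) * (1 / (1 - q))) by ring.
    apply Rle_trans with (2 * b * (1 / (1 - q)) * (1 / (1 - q))).
    + apply Rmult_le_compat_r; [unfold Rdiv; rewrite Rmult_1_l; apply Rlt_le, Rinv_0_lt_compat; lra|].
      apply Rmult_le_compat_l; lra.
    + right. field. lra.
Qed.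

Lemma err_bound t x n : 0 < t ->
  Rabs (Series (u t x) - Gn t (2 * PI * x) n) <= 4 * ex t 1 ^ n / (1 - ex t 1) ^ 2.
Proof.
  intros Ht. assert (Hq : ex t 1 < 1) by (apply ex_lt1; lra).
  assert (Hq0 : 0 < ex t 1) by apply ex_pos.
  replace (Series (u t x) - Gn t (2 * PI * x) n) with
    ((Series (u t x) - sum_f_R0 (u t x) n) + (sum_f_R0 (u t x) n - Gn t (2 * PI * x) n)) by ring.
  eapply Rle_trans; [apply Rabs_triang|].
  generalize (tail_u t x n Ht) (head_bound t x n Ht); intros T1 T2.
  assert (e1 : ex t (INR (S n) ^ 2) <= ex t 1 ^ n).
  { rewrite ex_pow. apply ex_le; auto. rewrite S_INR. generalize (pos_INR n); nra. }
  assert (e2 : ex t (INR n + 1) <= ex t 1 ^ n).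
  { rewrite ex_pow. apply ex_le; auto. lra. }
  set (q := ex t 1) in *.
  set (iq := / (1 - q)).
  assert (Hiq : 1 <= iq).
  { unfold iq. rewrite <- Rinv_1. apply Rinv_le_contravar; lra. }
  assert (R1 : 2 * ex t (INR (S n) ^ 2) / (1 - q) = 2 * ex t (INR (S n) ^ 2) * iq) by (unfold iq; field; lra).
  assert (R2 : 2 * ex t (INR n + 1) / (1 - q) ^ 2 = 2 * ex t (INR n + 1) * iq * iq) by (unfold iq; field; lra).
  assert (R3 : 4 * q ^ n / (1 - q) ^ 2 = 4 * q ^ n * iq * iq) by (unfold iq; field; lra).
  rewrite R1 in T1. rewrite R2 in T2. rewrite R3.
  generalize (ex_pos t (INR (S n) ^ 2)) (ex_pos t (INR n + 1)); intros.
  assert (0 <= q ^ n) by (apply pow_le; lra).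
  assert (2 * ex t (INR (S n) ^ 2) * iq <= 2 * q ^ n * iq * iq).
  { apply Rle_trans with (2 * q ^ n * iq); [apply Rmult_le_compat_r; lra|].
    rewrite <- (Rmult_1_r (2 * q ^ n * iq)) at 1. apply Rmult_le_compat_l; [|lra].
    apply Rmult_le_pos; lra. }
  assert (2 * ex t (INR n + 1) * iq * iq <= 2 * q ^ n * iq * iq).
  { apply Rmult_le_compat_r; [lra|]. apply Rmult_le_compat_r; lra. }
  lra.
Qed.

Lemma abs_le_split a b : Rabs a <= b -> - b <= a /\ a <= b.
Proof. intros; split; [generalize (Rle_abs (- a)); rewrite Rabs_Ropp | generalize (Rle_abs a)]; lra. Qed.

Lemma theta_min t x : 0 < t -> theta_it (1/2) t <= theta_it x t.
Proof.
  intros Ht. rewrite !theta_u.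
  destruct (Rle_or_lt (Series (u t (1/2))) (Series (u t x))) as [H|H]; auto. exfalso.
  set (d := Series (u t (1/2)) - Series (u t x)).
  assert (Hd : 0 < d) by (unfold d; lra).
  assert (Hq : ex t 1 < 1) by (apply ex_lt1; lra).
  assert (Hq0 : 0 < ex t 1) by apply ex_pos.
  assert (Hqa : Rabs (ex t 1) < 1) by (rewrite Rabs_pos_eq; lra).
  destruct (pow_lt_1_zero (ex t 1) Hqa (d * (1 - ex t 1) ^ 2 / 8)) as [N HN].
  { apply Rmult_lt_0_compat; [apply Rmult_lt_0_compat; [lra|apply pow_lt; lra]|lra]. }
  specialize (HN N (le_n N)). rewrite Rabs_pos_eq in HN by (apply pow_le; lra).
  assert (B : 4 * ex t 1 ^ N / (1 - ex t 1) ^ 2 < d / 2).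
  { assert (0 < (1 - ex t 1) ^ 2) by (apply pow_lt; lra).
    apply Rmult_lt_reg_r with ((1 - ex t 1) ^ 2); auto.
    unfold Rdiv. rewrite Rmult_assoc, Rinv_l, Rmult_1_r by lra. nra. }
  generalize (err_bound t x N Ht) (err_bound t (1/2) N Ht); intros E1 E2.
  replace (2 * PI * (1/2)) with PI in E2 by field.
  assert (M : Gn t PI N <= Gn t (2 * PI * x) N).
  { unfold Gn. apply Rmult_le_compat_r.
    - generalize (poch_pos t N Ht) (poch_pos t (2 * N) Ht); intros.
      apply Rmult_le_pos; [apply pow_le; lra|apply Rlt_le, Rinv_0_lt_compat; lra].
    - apply Pn_mono; auto. }
  apply abs_le_split in E1 as [E1a E1b]. apply abs_le_split in E2 as [E2a E2b].
  unfold d in *. lra.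
Qed.

Lemma part1 t : 0 < t -> c_min t = theta_it (1/2) t.
Proof.
  intros Ht. unfold c_min.
  rewrite (is_glb_Rbar_unique _ (Finite (theta_it (1/2) t))); [reflexivity|].
  split.
  - intros y [x0 ->]. simpl. apply theta_min; auto.
  - intros b Hb. apply Hb. exists (1/2). reflexivity.
Qed.

Lemma PI_lb : 31415/10000 <= PI.
Proof.
  generalize (PI_2_3_7_ineq 1); intros [H _].
  unfold tg_alt, PI_2_3_7_tg, Ratan_seq in H. simpl in H. lra.
Qed.

Lemma exp_165 : 5 <= exp (165/100).
Proof.
  assert (E : forall a, exp (2 * a) = exp a * exp a) by (intros; rewrite <- exp_plus; f_equal; ring).
  replace (165/100) with (2 * (2 * (2 * (2 * (2 * (2 * (165/6400))))))) by field.
  rewrite !E.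
  set (y := exp (165/6400)).
  assert (H0 : 1 + 165/6400 <= y) by apply exp_ineq1_le.
  assert (H1 : 10522/10000 <= y * y) by nra.
  assert (H2 : 11071/10000 <= y * y * (y * y)) by nra.
  set (y4 := y * y * (y * y)) in *.
  assert (H3 : 12255/10000 <= y4 * y4) by nra.
  set (y8 := y4 * y4) in *.
  assert (H4 : 15018/10000 <= y8 * y8) by nra.
  set (y16 := y8 * y8) in *.
  assert (H5 : 22554/10000 <= y16 * y16) by nra.
  set (y32 := y16 * y16) in *.
  nra.
Qed.

Lemma q_small t : 527/1000 < t -> ex t 1 <= 1/5.
Proof.
  intros Ht. generalize PI_lb; intros HP.
  unfold ex. replace (- PI * t * 1) with (- (PI * t)) by ring. rewrite exp_Ropp.
  assert (H : exp (165/100) < exp (PI * t)) by (apply exp_increasing; nra).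
  generalize exp_165; intros.
  replace (1/5) with (/ 5) by field. apply Rinv_le_contravar; lra.
Qed.

Lemma two_terms t x : sum_f_R0 (u t x) 1 = 1 + 2 * ex t 1 * cos (2 * PI * x).
Proof.
  change (sum_f_R0 (u t x) 1) with (u t x 0 + u t x 1).
  change (u t x 0) with 1.
  change (u t x 1) with (2 * ex t (INR 1 ^ 2) * cos (2 * PI * INR 1 * x)).
  replace (INR 1) with 1 by reflexivity.
  replace (1 ^ 2) with 1 by ring. replace (2 * PI * 1 * x) with (2 * PI * x) by ring.
  reflexivity.
Qed.

Theorem proposition1p3 :
  (forall t : R, 0 < t -> c_min t = theta_it (1/2) t) /\
  (forall t : R, 527/1000 < t -> C_max t * (C_max t - 1) / c_min t < 1).
Proof.
  split; [exact part1|].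
  intros t Ht. assert (Ht0 : 0 < t) by lra.
  rewrite part1 by auto. unfold C_max. rewrite !theta_u.
  generalize (q_small t Ht); intros Hq5.
  assert (Hq0 : 0 < ex t 1) by apply ex_pos.
  generalize (tail_u t 0 1 Ht0) (tail_u t (1/2) 1 Ht0); intros T0 T1.
  rewrite two_terms in T0, T1.
  replace (2 * PI * 0) with 0 in T0 by ring. rewrite cos_0 in T0.
  replace (2 * PI * (1/2)) with PI in T1 by field. rewrite cos_PI in T1.
  assert (E4 : ex t (INR 2 ^ 2) = ex t 1 ^ 4) by (rewrite ex_pow; f_equal; simpl; ring).
  rewrite E4 in T0, T1.
  set (q := ex t 1) in *.
  set (e := 2 * q ^ 4 / (1 - q)) in *.
  assert (He1 : e * (1 - q) = 2 * q ^ 4) by (unfold e; field; lra).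
  assert (Hq2 : q ^ 2 <= 1/25) by nra.
  assert (Hq4 : q ^ 4 <= 1/625) by (replace (q ^ 4) with (q ^ 2 * q ^ 2) by ring; nra).
  assert (He0 : 0 <= e) by (unfold e; apply Rmult_le_pos; [generalize (pow_le q 4); lra|apply Rlt_le, Rinv_0_lt_compat; lra]).
  assert (He : e <= 1/250) by nra.
  set (C := Series (u t 0)) in *. set (c := Series (u t (1/2))) in *.
  apply abs_le_split in T0 as [T0a T0b]. apply abs_le_split in T1 as [T1a T1b].
  set (s := 2 * q + e).
  assert (Hs : s <= 404/1000) by (unfold s; lra).
  assert (Hs0 : 0 <= s) by (unfold s; lra).
  assert (HC1 : C <= 1 + s) by (unfold s; lra).
  assert (HC0 : 0 <= C) by lra.
  assert (Hc : 1 - s <= c) by (unfold s; lra).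
  assert (HCC : C * (C - 1) <= (1 + s) * s).
  { destruct (Rle_or_lt 1 C); nra. }
  assert (Hcpos : 0 < c) by lra.
  unfold Rdiv. apply Rmult_lt_reg_r with c; auto.
  rewrite Rmult_assoc, Rinv_l, Rmult_1_r by lra. nra.
Qed.
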